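(* A ring $R$ is almost Armendariz if and only if the polynomial ring $R[x]$ is almost Armendariz.
   Context: All rings are associative with identity. For a ring $R$, $P(R)$ denotes the prime radical of $R$ (the intersection of all prime ideals of $R$, equivalently the set of strongly nilpotent elements of $R$). A ring $R$ is called almost Armendariz if whenever $f(x)=\sum_{i=0}^m a_ix^i$ and $g(x)=\sum_{j=0}^n b_jx^j\in R[x]$ satisfy $f(x)g(x)=0$, then $a_ib_j\in P(R)$ for all $0\le i\le m$, $0\le j\le n$. *)

(* Defs.v *)
From HB Require Import structures.
From mathcomp Require Import all_boot all_order all_algebra.
Set Implicit Arguments. Unset Strict Implicit. Unset Printing Implicit Defensive.
Import GRing.Theory.
Local Open Scope ring_scope.

Definition is_ideal (R : nzRingType) (I : R -> Prop) : Prop :=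
  [/\ I 0,
      (forall a b, I a -> I b -> I (a - b)),
      (forall r a, I a -> I (r * a)) &
      (forall r a, I a -> I (a * r))].

(* Prime ideal: proper ideal P such that for all ideals A, B,
   AB ⊆ P implies A ⊆ P or B ⊆ P.  (AB ⊆ P iff all products a*b lie in P,
   since P is additively closed.) *)
Definition is_prime_ideal (R : nzRingType) (P : R -> Prop) : Prop :=
  [/\ is_ideal P, ~ P 1 &
      (forall A B : R -> Prop, is_ideal A -> is_ideal B ->
         (forall a b, A a -> B b -> P (a * b)) ->
         (forall a, A a -> P a) \/ (forall b, B b -> P b))].

Definition prime_radical (R : nzRingType) (x : R) : Prop :=
  forall P : R -> Prop, is_prime_ideal P -> P x.

(* Almost Armendariz rings. Coefficients beyond the degree are 0, which
   lies in P(R), so quantifying over all indices is harmless. *)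
Definition almost_armendariz (R : nzRingType) : Prop :=
  forall f g : {poly R}, f * g = 0 ->
    forall i j : nat, prime_radical (f`_i * g`_j).

(* Main.v *)
Require Import Defs.
From HB Require Import structures.
From mathcomp Require Import all_boot all_order all_algebra.
From Stdlib Require Import Classical.
From mathcomp Require Import zify.
Set Implicit Arguments. Unset Strict Implicit. Unset Printing Implicit Defensive.
Import GRing.Theory.
Local Open Scope ring_scope.

Section Aux.
Variable R : nzRingType.

Lemma ideal0 (I : R -> Prop) : is_ideal I -> I 0.
Proof. by case. Qed.

Lemma idealN (I : R -> Prop) a : is_ideal I -> I a -> I (- a).
Proof. move=> [H0 HB _ _] Ha; rewrite -sub0r; exact: HB. Qed.

Lemma idealD (I : R -> Prop) a b : is_ideal I -> I a -> I b -> I (a + b).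
Proof.
move=> HI Ha Hb; have [_ HB _ _] := HI.
by rewrite -(opprK b); apply: HB => //; apply: idealN.
Qed.

Lemma idealML (I : R -> Prop) r a : is_ideal I -> I a -> I (r * a).
Proof. by case=> _ _ H _; apply: H. Qed.

Lemma idealMR (I : R -> Prop) r a : is_ideal I -> I a -> I (a * r).
Proof. by case=> _ _ _ H; apply: H. Qed.

Lemma ideal_sum (I : R -> Prop) n (F : 'I_n -> R) (P : pred 'I_n) :
  is_ideal I -> (forall i, P i -> I (F i)) -> I (\sum_(i < n | P i) F i).
Proof.
move=> HI HF; apply: (big_ind I); first exact: ideal0.
  by move=> ???; apply: idealD.
exact: HF.
Qed.

Lemma prime_radical0 : prime_radical (0 : R).
Proof. by move=> P [HI _ _]; apply: ideal0. Qed.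

Lemma prime_aRb (P : R -> Prop) a b : is_prime_ideal P ->
  (forall r, P (a * r * b)) -> P a \/ P b.
Proof.
move=> [HI H1 HP] Hab.
pose A x := forall r, P (x * r * b).
pose B y := forall x, A x -> P (x * y).
have IA : is_ideal A.
  split.
  - by move=> r; rewrite !mul0r; apply: ideal0.
  - move=> x y Hx Hy r; rewrite mulrBl mulrBl; have [_ HB _ _] := HI; exact: HB.
  - by move=> s x Hx r; rewrite -!mulrA; apply: (idealML _ HI); rewrite !mulrA.
  - by move=> s x Hx r; have := Hx (s * r); rewrite !mulrA.
have IB : is_ideal B.
  split.
  - by move=> x _; rewrite mulr0; apply: ideal0.
  - move=> x y Hx Hy z Hz; rewrite mulrBr; have [_ HB _ _] := HI.
    by apply: HB; [apply: Hx | apply: Hy].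
  - move=> s y Hy x Hx; rewrite mulrA; apply: Hy.
    by move=> r; have := Hx (s * r); rewrite !mulrA.
  - by move=> s y Hy x Hx; rewrite mulrA; apply: (idealMR _ HI); apply: Hy.
have [HA|HB'] := HP A B IA IB (fun x y Hx Hy => Hy x Hx).
  by left; apply: HA.
right; apply: HB' => x Hx; have := Hx 1; by rewrite mulr1.
Qed.

Definition polyI (I : R -> Prop) (h : {poly R}) := forall n, I h`_n.

Lemma polyI_ideal I : is_ideal I -> is_ideal (polyI I).
Proof.
move=> HI; split.
- by move=> n; rewrite coef0; apply: ideal0.
- by move=> a b Ha Hb n; rewrite coefB; have [_ HB _ _] := HI; apply: HB.
- move=> r a Ha n; rewrite coefM; apply: ideal_sum => // i _.
  exact: idealML.
- move=> r a Ha n; rewrite coefM; apply: ideal_sum => // i _.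
  exact: idealMR.
Qed.

Lemma polyI_C I c : is_ideal I -> I c -> polyI I c%:P.
Proof. by move=> HI Hc n; rewrite coefC; case: eqP => _ //; apply: ideal0. Qed.

End Aux.

Lemma ideal_polyM (R : nzRingType) (Q : {poly R} -> Prop) (p q : {poly R}) :
  is_ideal Q -> (forall s t, Q (p`_s * q`_t)%:P) -> Q (p * q).
Proof.
move=> HQ H.
rewrite -(coefK p) -(coefK q) !poly_def mulr_suml.
apply: (@ideal_sum _ _ _ _ xpredT HQ) => s _; rewrite mulr_sumr; apply: (@ideal_sum _ _ _ _ xpredT HQ) => t _.
rewrite -!mul_polyC mulrA -(mulrA _ 'X^s) -commr_polyXn !mulrA -polyCM.
by apply: (idealMR _ HQ); apply: (idealMR _ HQ); apply: H.
Qed.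

Lemma prime_contract (R : nzRingType) (Q : {poly R} -> Prop) :
  is_prime_ideal Q -> is_prime_ideal (fun c : R => Q c%:P).
Proof.
move=> [HQ H1 HP]; split.
- split.
  + by rewrite polyC0; exact: (ideal0 HQ).
  + by move=> a b Ha Hb; rewrite polyCB; have [_ HB _ _] := HQ; apply: HB.
  + by move=> r a Ha; rewrite polyCM; apply: (idealML _ HQ).
  + by move=> r a Ha; rewrite polyCM; apply: (idealMR _ HQ).
- by [].
- move=> A B IA IB HAB.
  have := HP (polyI A) (polyI B) (polyI_ideal IA) (polyI_ideal IB).
  case.
  + by move=> p q Hp Hq; apply: ideal_polyM => // s t; apply: HAB.
  + by move=> HA; left=> a Ha; apply: HA; apply: polyI_C.
  + by move=> HB; right=> b Hb; apply: HB; apply: polyI_C.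
Qed.

Lemma prime_radical_C (R : nzRingType) (c : R) :
  prime_radical c -> prime_radical (c%:P).
Proof. by move=> Hc Q HQ; apply: (Hc _ (prime_contract HQ)). Qed.

Lemma max_bad (Q : nat -> Prop) N : (forall n, (N <= n)%N -> Q n) ->
  (exists n, ~ Q n) -> exists m, ~ Q m /\ forall i, (m < i)%N -> Q i.
Proof.
elim: N => [|N IH] H.
  by move=> [n Hn]; exfalso; apply: Hn; apply: H.
case: (classic (Q N)) => HN.
  apply: IH => n; rewrite leq_eqVlt; case/orP => [/eqP <- //|]; exact: H.
by move=> _; exists N; split.
Qed.

Lemma prime_ext (R : nzRingType) (P : R -> Prop) :
  is_prime_ideal P -> is_prime_ideal (polyI P).
Proof.
move=> HPr; have [HI H1 HP] := HPr; split.
- exact: polyI_ideal.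
- by move=> H; apply: H1; have := H 0%N; rewrite coef1.
move=> A B IA IB HAB.
case: (classic (forall a, A a -> polyI P a)) => [HA|nA]; first by left.
case: (classic (forall b, B b -> polyI P b)) => [HB|nB]; first by right.
exfalso.
have [f [Af nf]] : exists f, A f /\ ~ polyI P f.
  apply: NNPP => C; apply: nA => a Aa; apply: NNPP => na; apply: C; by exists a.
have [g [Bg ng]] : exists g, B g /\ ~ polyI P g.
  apply: NNPP => C; apply: nB => a Aa; apply: NNPP => na; apply: C; by exists a.
have exbad (h : {poly R}) : ~ polyI P h ->
    exists m, ~ P h`_m /\ forall i, (m < i)%N -> P h`_i.
  move=> nh; apply: (@max_bad (fun i => P h`_i) (size h)).
    by move=> n Hn; rewrite nth_default //; apply: (ideal0 HI).
  apply: NNPP => C; apply: nh => n; apply: NNPP => Cn; apply: C; by exists n.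
have [m [nfm Hfm]] := exbad f nf.
have [n [ngn Hgn]] := exbad g ng.
have key : forall r, P (f`_m * r * g`_n).
  move=> r.
  have Hfg := HAB f (r%:P * g) Af (idealML _ IB Bg) (m + n)%N.
  have Hmo : (m < (m + n).+1)%N by rewrite ltnS leq_addr.
  move: Hfg; rewrite coefM (bigD1 (Ordinal Hmo)) //= addKn coefCM.
  set T := \sum_(i < _ | _) _ => HT.
  have HR : P T.
    apply: (@ideal_sum _ _ _ _ _ HI) => j /= Hj.
    rewrite coefCM.
    case: (ltngtP j m) => Hjm.
    - apply: (idealML _ HI); apply: (idealML _ HI); apply: Hgn.
      rewrite ltn_subRL; lia.
    - by apply: (idealMR _ HI); apply: Hfm.
    - by exfalso; move: Hj; rewrite -val_eqE /= Hjm eqxx.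
  have [_ HB _ _] := HI.
  have := HB _ _ HT HR; rewrite addrK mulrA //.
have [] := prime_aRb HPr key; by [].
Qed.

Lemma prime_radical_Cinv (R : nzRingType) (c : R) :
  prime_radical (c%:P) -> prime_radical c.
Proof.
move=> Hc P HP; have := Hc _ (prime_ext HP) 0%N; by rewrite coefC.
Qed.

Lemma kron (R : nzRingType) (F : {poly {poly R}}) k :
  (forall i, leq (size F`_i) k) ->
  forall i s, (s < k)%N -> (F.['X^k])`_(k * i + s) = (F`_i)`_s.
Proof.
elim/poly_ind: F => [|F c IH] Hsz i s Hs.
  by rewrite horner0 !coef0.
rewrite hornerMXaddC !coefD coefMXn coefMX !coefC.
case: i => [|i].
  by rewrite muln0 add0n Hs /= coef0 !add0r.
have Hc : (size c <= k)%N by have := Hsz 0%N; rewrite coefD coefMX coefC add0r.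
have HF : forall i, leq (size F`_i) k.
  by move=> j; have := Hsz j.+1; rewrite coefD coefMX coefC /= addr0.
have -> : (k * i.+1 + s < k)%N = false by apply/negbTE; rewrite -leqNgt mulnS; lia.
have -> : (k * i.+1 + s - k = k * i + s)%N by rewrite mulnS; lia.
rewrite IH //= coef0 addr0 (nth_default _ (leq_trans Hc _)) ?addr0 //.
rewrite mulnS; lia.
Qed.

Theorem theorem2p3 (R : nzRingType) :
  almost_armendariz R <-> almost_armendariz {poly R}.
Proof.
split.
- move=> HR F G HFG i j Q HQ.
  have HQi : is_ideal Q by case: HQ.
  apply: ideal_polyM => // s t.
  apply: (_ : prime_radical _) _ (prime_contract HQ).
  set kF := \big[maxn/0%N]_(i < size F) size F`_i.
  set kG := \big[maxn/0%N]_(i < size G) size G`_i.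
  pose k := (kF + kG)%N.
  have szF : forall i, leq (size F`_i) k.
    move=> i'; case: (ltnP i' (size F)) => h.
      apply: leq_trans (leq_addr kG kF).
      exact: (@leq_bigmax_cond _ xpredT (fun i : 'I_(size F) => size F`_i) (Ordinal h)).
    by rewrite nth_default // size_poly0.
  have szG : forall i, leq (size G`_i) k.
    move=> i'; case: (ltnP i' (size G)) => h.
      apply: leq_trans (leq_addl kF kG).
      exact: (@leq_bigmax_cond _ xpredT (fun i : 'I_(size G) => size G`_i) (Ordinal h)).
    by rewrite nth_default // size_poly0.
  case: (ltnP s k) => Hs; last first.
    by rewrite (nth_default _ (leq_trans (szF i) Hs)) mul0r; apply: prime_radical0.
  case: (ltnP t k) => Ht; last first.
    by rewrite (nth_default _ (leq_trans (szG j) Ht)) mulr0; apply: prime_radical0.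
  rewrite -(kron szF i Hs) -(kron szG j Ht); apply: HR.
  rewrite -hornerM_comm ?HFG ?horner0 //.
  by rewrite /comm_poly commr_polyXn.
- move=> HR f g Hfg i j; apply: prime_radical_Cinv; rewrite polyCM.
  rewrite -!(coef_map polyC).
  apply: HR; by rewrite -rmorphM Hfg rmorph0.
Qed.
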